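(* Let $A$ and $B$ be finite groups, each with at least $2$ elements. For an integer $m\geq 1$, let $s_m$ be the number of elements $g\in A$ with $g^m=1$. For a divisor $n$ of $|B|$, let $d_n$ be the number of elements of $B$ of order $n$. Then $$a(A\wr B)=\sum_{m \mid |A|,\ n \mid |B|} \frac{m}{n}\left(\frac{s_m}{|A|}\right)^{n} d_{|B|/n}\,\tau\!\left(\frac{|A|}{m}\right),$$ where the sum runs over all positive divisors $m$ of $|A|$ and all positive divisors $n$ of $|B|$.
   Context: For a finite group $G$, the average order is $a(G)=\frac{1}{|G|}\sum_{g\in G}\mathrm{order}(g)$. For groups $A,B$, let $K=\prod_{b\in B}A$, on which $B$ acts by $x\cdot(\alpha_b)_b=(\alpha_{x^{-1}b})_b$ for $x\in B$; the wreath product $A\wr B$ is the semidirect product $K\rtimes B$ for this action. For a positive integer $n$, $\tau(n)=\prod_{p\mid n,\ p\text{ prime}}(1-p)$ (so $\tau(1)=1$). *)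

(* Defs.v *)
From HB Require Import structures.
From mathcomp Require Import all_boot all_order all_algebra all_fingroup.
Set Implicit Arguments. Unset Strict Implicit. Unset Printing Implicit Defensive.
Import GRing.Theory Num.Theory.

(* The wreath product A wr B = K x| B with K = prod_{b in B} A (functions
   B -> A), B acting by (x . alpha)_b = alpha_(x^-1 b). *)
Definition wreath (aT bT : finGroupType) : Type := ({ffun bT -> aT} * bT)%type.

Section Wreath.
Variables aT bT : finGroupType.
Local Open Scope group_scope.

HB.instance Definition _ := Finite.on (wreath aT bT).

Definition wr_act (x : bT) (al : {ffun bT -> aT}) : {ffun bT -> aT} :=
  [ffun b => al (x^-1 * b)].

Definition wr_mul (u v : wreath aT bT) : wreath aT bT :=
  ([ffun b => u.1 b * wr_act u.2 v.1 b], u.2 * v.2).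
Definition wr_one : wreath aT bT := ([ffun => 1], 1).
Definition wr_inv (u : wreath aT bT) : wreath aT bT :=
  (wr_act u.2^-1 [ffun b => (u.1 b)^-1], u.2^-1).

Lemma wr_mulA : associative wr_mul.
Proof.
case=> f b [g c] [h d]; rewrite /wr_mul /wr_act /=; congr (_, _); last exact: mulgA.
by apply/ffunP=> x; rewrite !ffunE invMg !mulgA.
Qed.

Lemma wr_mul1 : left_id wr_one wr_mul.
Proof.
case=> f b; rewrite /wr_mul /wr_act /=; congr (_, _); last exact: mul1g.
by apply/ffunP=> x; rewrite !ffunE invg1 !mul1g.
Qed.

Lemma wr_mulV : left_inverse wr_one wr_inv wr_mul.
Proof.
case=> f b; rewrite /wr_mul /wr_act /=; congr (_, _); last exact: mulVg.
by apply/ffunP=> x; rewrite !ffunE mulVg.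
Qed.

HB.instance Definition _ :=
  Finite_isGroup.Build (wreath aT bT) wr_mulA wr_mul1 wr_mulV.
End Wreath.

Definition avg_order (gT : finGroupType) : rat :=
  ((\sum_(g : gT) #[g]%g)%:R / #|gT|%:R)%R.

Definition tau (n : nat) : rat := (\prod_(p <- primes n) (1 - p%:R))%R.

Definition s_count (aT : finGroupType) (m : nat) : nat :=
  #|[set g : aT | (g ^+ m == 1)%g]|.

Definition d_count (bT : finGroupType) (n : nat) : nat :=
  #|[set g : bT | #[g]%g == n]|.

(* Main.v *)
Require Import Defs.
From HB Require Import structures.
From mathcomp Require Import all_boot all_order all_algebra all_fingroup all_solvable.
From mathcomp Require Import ring.
Import GRing.Theory Num.Theory.

Section Tau.
Local Open Scope ring_scope.

Lemma tau1 : tau 1 = 1.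
Proof. by rewrite /tau big_nil. Qed.

Lemma tau_mul_dvd p n : prime p -> (0 < n)%N -> (p %| n)%N -> tau (p * n)%N = tau n.
Proof.
move=> pp n0 pn; rewrite /tau; congr (\prod_(_ <- _) _).
apply/eq_primes => q; rewrite !mem_primes muln_gt0 prime_gt0 // n0 /=.
case qp: (prime q) => //=; apply/idP/idP; last exact: dvdn_mull.
rewrite Euclid_dvdM // => /orP [|] //; rewrite dvdn_prime2 // => /eqP ->; exact pn.
Qed.

Lemma tau_mul_ndvd p n : prime p -> (0 < n)%N -> ~~ (p %| n)%N ->
  tau (p * n)%N = (1 - p%:R) * tau n.
Proof.
move=> pp n0 pn; rewrite /tau (perm_big (p :: primes n)); first by rewrite big_cons.
apply: uniq_perm; first exact: primes_uniq.
  by rewrite /= primes_uniq mem_primes pp n0 (negbTE pn).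
move=> q; rewrite inE !mem_primes muln_gt0 prime_gt0 // n0 /=.
case qp: (prime q) => /=; last by case: eqP qp => // ->; rewrite pp.
rewrite Euclid_dvdM // dvdn_prime2 //.
Qed.

Lemma div_split p K : prime p -> (0 < K)%N ->
  perm_eq (divisors (p * K))
    ([seq e <- divisors K | ~~ (p %| e)%N] ++ map (muln p) (divisors K)).
Proof.
move=> pp K0; have p0 := prime_gt0 pp.
apply: uniq_perm; first exact: divisors_uniq.
  rewrite cat_uniq filter_uniq ?divisors_uniq // map_inj_uniq ?divisors_uniq //;
    last by move=> a b /(congr1 (divn^~ p)); rewrite !mulKn.
  rewrite andbT; apply/hasPn => d /mapP [e _ ->].
  by rewrite mem_filter dvdn_mulr.
move=> d; rewrite mem_cat mem_filter -!dvdn_divisors ?muln_gt0 ?p0 //.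
apply/idP/idP.
  case pd: (p %| d)%N => /= dK.
    apply/mapP; exists (d %/ p)%N; last by rewrite mulnC divnK.
    by rewrite -dvdn_divisors // -(dvdn_pmul2l p0) mulnC divnK.
  by apply/orP; left; rewrite -(Gauss_dvdr _ (_ : coprime d p)) // coprime_sym prime_coprime // pd.
case/orP => [/andP [_ dK] | /mapP [e]]; first exact: dvdn_mull.
by rewrite -dvdn_divisors // => eK ->; rewrite dvdn_pmul2l.
Qed.

Lemma filter_div p K : prime p -> (0 < K)%N -> (p %| K)%N ->
  perm_eq [seq e <- divisors K | ~~ (p %| e)%N]
          [seq e <- divisors (K %/ p) | ~~ (p %| e)%N].
Proof.
move=> pp K0 pK; have p0 := prime_gt0 pp.
have K'0 : (0 < K %/ p)%N by rewrite divn_gt0 // dvdn_leq.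
apply: uniq_perm; rewrite ?filter_uniq ?divisors_uniq //.
move=> d; rewrite !mem_filter -!dvdn_divisors //.
case pd: (p %| d)%N => //=.
have cdp : coprime d p by rewrite coprime_sym prime_coprime // pd.
by rewrite -{1}(divnK pK) mulnC Gauss_dvdr.
Qed.

Definition Gs (M : nat) : rat := \sum_(e <- divisors M) (e%:R * tau (M %/ e)).

Lemma Gs_eq1 M : (0 < M)%N -> Gs M = 1.
Proof.
elim/ltn_ind: M => M IH M0.
case: (ltngtP M 1) => [|M1|->]; first by rewrite ltnNge M0.
  2: by rewrite /Gs /divisors /= big_cons big_nil divnn /= tau1 mul1r addr0.
set p := pdiv M; have pp : prime p by rewrite pdiv_prime.
have pM : (p %| M)%N by exact: pdiv_dvd.
have p0 := prime_gt0 pp.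
set K := (M %/ p)%N.
have MK : M = (p * K)%N by rewrite /K mulnC divnK.
have K0 : (0 < K)%N by rewrite divn_gt0 // dvdn_leq.
have KM : (K < M)%N by rewrite /K ltn_Pdiv // prime_gt1.
rewrite /Gs MK (perm_big _ (@div_split p K pp K0)) big_cat /= big_map.
have -> : \sum_(i <- divisors K) ((p * i)%N%:R * tau (p * K %/ (p * i))) = p%:R.
  transitivity (p%:R * Gs K); last by rewrite IH // mulr1.
  rewrite /Gs big_distrr /=; apply: eq_bigr => i _.
  by rewrite divnMl // natrM mulrA.
rewrite big_filter.
case: (boolP (p %| K)%N) => pK; last first.
  transitivity (\sum_(i <- divisors K) (i%:R * ((1 - p%:R) * tau (K %/ i))) + p%:R).
    congr (_ + _); rewrite big_mkcond; apply: eq_big_seq => i.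
    rewrite -dvdn_divisors // => iK; have i0 := dvdn_gt0 K0 iK.
    have -> : ~~ (p %| i)%N by apply: contra pK => /dvdn_trans; apply.
    rewrite -muln_divA // tau_mul_ndvd //; first by rewrite divn_gt0 // dvdn_leq.
    by apply: contra pK => pKi; rewrite -(divnK iK) dvdn_mulr.
  rewrite (eq_bigr (fun i => (1 - p%:R) * (i%:R * tau (K %/ i)))); last first.
    by move=> i _; rewrite mulrCA.
  by rewrite -big_distrr /= -/(Gs K) IH // mulr1 subrK.
set K' := (K %/ p)%N.
have K'0 : (0 < K')%N by rewrite divn_gt0 // dvdn_leq.
have K'K : (K' < K)%N by rewrite /K' ltn_Pdiv // prime_gt1.
have KK' : K = (p * K')%N by rewrite /K' mulnC divnK.
have HK := IH K KM K0.
have HK' := IH K' (ltn_trans K'K KM) K'0.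
have : Gs K = \sum_(i <- divisors K | ~~ (p %| i)%N) (i%:R * tau (K %/ i)) + p%:R.
  rewrite /Gs {1}KK' (perm_big _ (@div_split p K' pp K'0)) big_cat /= big_map big_filter.
  congr (_ + _).
    apply/esym; rewrite -[LHS]big_filter -[RHS]big_filter; apply: perm_big.
    exact: filter_div.
  transitivity (p%:R * Gs K'); last by rewrite HK' mulr1.
  rewrite /Gs big_distrr /=; apply: eq_bigr => i _.
  by rewrite {1}KK' divnMl // natrM mulrA.
rewrite HK => E.
have -> : \sum_(i <- divisors K | ~~ (p %| i)%N) ((i%:R : rat) * tau (p * K %/ i))
        = \sum_(i <- divisors K | ~~ (p %| i)%N) (i%:R * tau (K %/ i)).
  rewrite -[LHS]big_filter -[RHS]big_filter; apply: eq_big_seq => i; rewrite mem_filter -dvdn_divisors // => /andP [pi iK].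
  have i0 := dvdn_gt0 K0 iK.
  rewrite -muln_divA // tau_mul_dvd //; first by rewrite divn_gt0 // dvdn_leq.
  have : (p %| i * (K %/ i))%N by rewrite mulnC divnK.
  by rewrite Euclid_dvdM // (negbTE pi).
exact: esym E.
Qed.

Lemma tau_sum L N : (0 < N)%N -> (L %| N)%N ->
  \sum_(m <- divisors N) (if (L %| m)%N then m%:R * tau (N %/ m) else 0) = L%:R :> rat.
Proof.
move=> N0 LN; have L0 := dvdn_gt0 N0 LN.
have NL0 : (0 < N %/ L)%N by rewrite divn_gt0 // dvdn_leq.
rewrite -big_mkcond -big_filter.
rewrite (perm_big (map (muln L) (divisors (N %/ L)))); last first.
  apply: uniq_perm; rewrite ?filter_uniq ?divisors_uniq //.
    rewrite map_inj_uniq ?divisors_uniq //.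
    by move=> a b /(congr1 (divn^~ L)); rewrite !mulKn.
  move=> d; rewrite mem_filter -dvdn_divisors //; apply/idP/idP.
    case/andP => Ld dN; apply/mapP; exists (d %/ L)%N; last by rewrite mulnC divnK.
    by rewrite -dvdn_divisors // -(dvdn_pmul2l L0) !(mulnC L) !divnK.
  case/mapP => e; rewrite -dvdn_divisors // => eN ->.
  by rewrite (dvdn_mulr _ (dvdnn L)) /= -(divnK LN) (mulnC _ L) dvdn_pmul2l.
rewrite big_map.
transitivity (L%:R * Gs (N %/ L)); last by rewrite Gs_eq1 // mulr1.
rewrite /Gs big_distrr /=; apply: eq_bigr => e _.
by rewrite divnMA natrM mulrA.
Qed.

End Tau.


Section G.
Variables aT bT : finGroupType.
Local Notation W := (wreath aT bT).
Local Open Scope group_scope.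

Definition Pw (k : nat) (al : {ffun bT -> aT}) (x : bT) : {ffun bT -> aT} :=
  [ffun b => \prod_(j < k) al ((x ^+ j)^-1 * b)].

Lemma wr_mulE (u v : W) : u * v = wr_mul u v. Proof. by []. Qed.
Lemma wr_oneE : (1 : W) = wr_one aT bT. Proof. by []. Qed.

Lemma wr_expg k al x : ((al, x) : W) ^+ k = (Pw k al x, x ^+ k).
Proof.
elim: k => [|k IH].
  rewrite expg0 wr_oneE /wr_one; congr pair.
  by apply/ffunP => b; rewrite !ffunE big_ord0.
rewrite expgSr IH wr_mulE /wr_mul /wr_act /=; congr pair; last by rewrite expgSr.
by apply/ffunP => b; rewrite !ffunE big_ord_recr.
Qed.

Lemma order_split al x :
  #[((al, x) : W)] = (#[x] * #[((Pw #[x] al x, (1%g : bT)) : W)])%N.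
Proof.
set g := ((al, x) : W).
have gx : g ^+ #[x] = (Pw #[x] al x, (1%g : bT)) by rewrite wr_expg expg_order.
have dv : (#[x] %| #[g])%N.
  rewrite order_dvdn; have := expg_order g; rewrite wr_expg wr_oneE.
  by move/(congr1 snd) => /= ->.
by rewrite -gx orderXdiv // mulnC divnK.
Qed.

Lemma Pw1 (be : {ffun bT -> aT}) m : Pw m be 1 = [ffun b => be b ^+ m].
Proof.
apply/ffunP => b; rewrite !ffunE.
elim: m => [|m IH]; first by rewrite big_ord0.
by rewrite big_ord_recr /= IH expg1n invg1 mul1g expgSr.
Qed.

Lemma ord_h (be : {ffun bT -> aT}) m :
  (#[((be, (1%g : bT)) : W)] %| m)%N = [forall b, be b ^+ m == 1].
Proof.
rewrite order_dvdn wr_expg Pw1 expg1n wr_oneE /wr_one.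
apply/eqP/forallP => [[E] b | H].
  by have := congr1 (fun f : {ffun bT -> aT} => f b) E; rewrite !ffunE => ->.
by congr pair; apply/ffunP => b; rewrite !ffunE; apply/eqP.
Qed.

Lemma ord_h_dvd (be : {ffun bT -> aT}) : (#[((be, (1%g : bT)) : W)] %| #|aT|)%N.
Proof.
rewrite ord_h; apply/forallP => b.
by rewrite -cardsT expg_cardG // inE.
Qed.


Definition Tx (x : bT) : {set bT} := [set t : bT | repr (<[x]> :* t) == t].

Lemma Tx_rep x b : repr (<[x]> :* b) \in Tx x.
Proof.
rewrite inE; have /rcoset_eqP -> : repr (<[x]> :* b) \in <[x]> :* b.
  exact: mem_repr (rcoset_refl _ _).
by [].
Qed.

Lemma Tx_cover x b : exists i, exists2 t, t \in Tx x & b = x ^+ i * t.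
Proof.
set t := repr (<[x]> :* b).
have : t \in <[x]> :* b by exact: mem_repr (rcoset_refl _ _).
case/rcosetP => a ax tE; have : a^-1 \in <[x]> by rewrite groupV.
case/cycleP => i ai; exists i; exists t; first exact: Tx_rep.
by rewrite -ai tE mulKg.
Qed.

Lemma Tx_sep x t j : t \in Tx x -> (0 < j < #[x])%N -> (x ^+ j)^-1 * t \notin Tx x.
Proof.
move=> tT /andP [j0 jx]; apply/negP => yT.
have E : <[x]> :* ((x ^+ j)^-1 * t) = <[x]> :* t.
  by apply/rcoset_eqP/rcosetP; exists (x ^+ j)^-1; rewrite // groupV mem_cycle.
move: yT tT; rewrite !inE E => /eqP -> /eqP /(canRL (mulgK t)).
rewrite mulgV => /eqP; rewrite invg_eq1 -order_dvdn => /dvdn_leq.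
by rewrite j0 leqNgt jx => /(_ isT).
Qed.

Lemma Tx_card x : (#|Tx x| * #[x])%N = #|bT|.
Proof.
have -> : #|Tx x| = #|rcosets <[x]> [set: bT]|.
  rewrite -(card_in_imset (f := fun t => <[x]> :* t)); last first.
    move=> t1 t2; rewrite !inE => /eqP E1 /eqP E2 E.
    by rewrite -E1 -E2 E.
  apply: eq_card => C; apply/imsetP/imsetP => [[t _ ->]|[b _ ->]].
    by exists t; [exact: in_setT | rewrite rcosetE].
  exists (repr (<[x]> :* b)); first exact: Tx_rep.
  by rewrite rcosetE; apply/esym/rcoset_eqP; exact: mem_repr (rcoset_refl _ _).
rewrite mulnC -cardsT -(Lagrange (subsetT <[x]>)) //.
Qed.


Lemma comm_pow (a r : aT) m : ((a * r) ^+ m == 1) = ((r * a) ^+ m == 1).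
Proof.
have -> : r * a = (a * r) ^ a by rewrite conjgE !mulgA mulVg mul1g.
by rewrite -conjXg conjg_eq1.
Qed.

Lemma order_S (x : bT) : exists n', #[x] = n'.+1.
Proof. by exists #[x].-1; rewrite prednK // order_gt0. Qed.

Lemma Pw_step al x m b :
  ((Pw #[x] al x (x * b)) ^+ m == 1) = ((Pw #[x] al x b) ^+ m == 1).
Proof.
have [n' En] := order_S x.
have xn : (x ^+ n')^-1 = x.
  by apply/eqP; rewrite eq_invg_mul -expgSr -En expg_order.
rewrite !ffunE En big_ord_recl big_ord_recr /= xn expg0 invg1 mul1g.
have -> : \prod_(i < n') al ((x ^+ (lift ord0 i))^-1 * (x * b))
        = \prod_(i < n') al ((x ^+ i)^-1 * b).
  by apply: eq_bigr => i _; rewrite lift0 expgS invMg -mulgA mulKg.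
exact: comm_pow.
Qed.

Lemma Pw_shift al x m i b :
  ((Pw #[x] al x (x ^+ i * b)) ^+ m == 1) = ((Pw #[x] al x b) ^+ m == 1).
Proof.
elim: i => [|i IH]; first by rewrite expg0 mul1g.
by rewrite expgS -mulgA Pw_step IH.
Qed.

Definition Phi x (al : {ffun bT -> aT}) : {ffun bT -> aT} :=
  [ffun b => if b \in Tx x then Pw #[x] al x b else al b].

Lemma Phi_inj x : injective (Phi x).
Proof.
move=> a1 a2 E; apply/ffunP => b.
have Eb c := congr1 (fun f : {ffun bT -> aT} => f c) E.
case bIn: (b \in Tx x); last by have := Eb b; rewrite /= !ffunE bIn.
have [n' En] := order_S x.
have := Eb b; rewrite /= !ffunE bIn En !big_ord_recl /= expg0 invg1 !mul1g.
have -> : \prod_(i < n') a1 ((x ^+ (lift ord0 i))^-1 * b)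
        = \prod_(i < n') a2 ((x ^+ (lift ord0 i))^-1 * b).
  apply: eq_bigr => i _; have := Eb ((x ^+ (lift ord0 i))^-1 * b).
  rewrite /= !ffunE (negbTE (Tx_sep _ _ (lift ord0 i) bIn _)) //.
  by rewrite lift0 En; apply/andP; split => //; rewrite ltnS; exact: ltn_ord.
by move/mulIg.
Qed.

Lemma cond_Phi x m al :
  [forall b, (Pw #[x] al x b) ^+ m == 1] =
  [forall b, (b \in Tx x) ==> ((Phi x al b) ^+ m == 1)].
Proof.
apply/forallP/forallP => H b.
  by apply/implyP => bIn; rewrite ffunE bIn; exact: H.
case: (Tx_cover x b) => i [t tIn ->]; rewrite Pw_shift.
by have := H t; rewrite ffunE tIn.
Qed.

Lemma cnt_D (T : {set bT}) m :
  #|[set ga : {ffun bT -> aT} | [forall b, (b \in T) ==> (ga b ^+ m == 1)]]|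
  = (s_count aT m ^ #|T| * #|aT| ^ (#|bT| - #|T|))%N.
Proof.
pose F (b : bT) : pred aT := if b \in T then (fun g : aT => g ^+ m == 1) else (fun _ => true).
have -> : #|[set ga : {ffun bT -> aT} | [forall b, (b \in T) ==> (ga b ^+ m == 1)]]| = #|family F|.
  apply: eq_card => ga; rewrite inE; apply/forallP/familyP => H b; have := H b; rewrite /F;
  case: (b \in T) => //=; rewrite inE //.
rewrite card_family.
rewrite foldrE big_map big_enum /=.
rewrite (bigID (fun b => b \in T)) /=.
rewrite [X in (X * _)%N](eq_bigr (fun _ => s_count aT m)); last first.
  by move=> b bIn; rewrite /F bIn /s_count; apply: eq_card => g; rewrite inE.
rewrite [X in (_ * X)%N](eq_bigr (fun _ => #|aT|)); last first.
  by move=> b bIn; rewrite /F (negbTE bIn); apply: eq_card.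
rewrite !prod_nat_const; congr (_ * _ ^ _)%N.
  by rewrite -(cardC T) addKn; apply: eq_card => b; rewrite !inE.
Qed.

Lemma cnt_C x m :
  #|[set al : {ffun bT -> aT} | [forall b, (Pw #[x] al x b) ^+ m == 1]]|
  = (s_count aT m ^ #|Tx x| * #|aT| ^ (#|bT| - #|Tx x|))%N.
Proof.
rewrite -cnt_D -(card_imset _ (@Phi_inj x)); apply: eq_card => ga.
have [g K1 K2] := injF_bij (@Phi_inj x).
rewrite inE; apply/imsetP/idP => [[al]|H].
  by rewrite inE cond_Phi => H ->.
by exists (g ga); rewrite ?K2 // inE cond_Phi K2.
Qed.

End G.


Local Open Scope ring_scope.
Arguments Tx {bT}. Arguments Pw {aT bT}. Arguments Tx_card {bT}.
Arguments Tx {bT}. Arguments Pw {aT bT}. Arguments Tx_card {bT}.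

Lemma card_pos (gT : finGroupType) : (0 < #|gT|)%N.
Proof. by apply/card_gt0P; exists 1%g. Qed.

Lemma sum_x (aT bT : finGroupType) (x : bT) :
  ((\sum_(al : {ffun bT -> aT}) #[((al, x) : wreath aT bT)]%g)%:R : rat) =
  #[x]%g%:R * \sum_(m <- divisors #|aT|) (m%:R * tau (#|aT| %/ m) *
     ((s_count aT m ^ #|Tx x| * #|aT| ^ (#|bT| - #|Tx x|))%N)%:R).
Proof.
rewrite natr_sum.
transitivity (\sum_(al : {ffun bT -> aT}) #[x]%g%:R *
   \sum_(m <- divisors #|aT|)
     (if (#[((Pw #[x]%g al x, 1%g) : wreath aT bT)]%g %| m)%N
      then m%:R * tau (#|aT| %/ m) else 0)).
  apply: eq_bigr => al _; rewrite order_split natrM tau_sum ?ord_h_dvd //.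
  exact: card_pos.
rewrite -big_distrr /=; congr (_ * _).
rewrite exchange_big /=; apply: eq_bigr => m _.
rewrite -cnt_C.
transitivity (\sum_(al in [set al : {ffun bT -> aT} |
                 [forall b, (Pw #[x] al x b) ^+ m == 1]%g]) (m%:R * tau (#|aT| %/ m))).
  by rewrite [RHS]big_mkcond /=; apply: eq_bigr => al _; rewrite ord_h inE.
by rewrite sumr_const mulr_natr.
Qed.

Lemma divn_div (B o : nat) : (0 < B)%N -> (o %| B)%N -> (B %/ (B %/ o))%N = o.
Proof.
move=> B0 oB; have o0 := dvdn_gt0 B0 oB.
by rewrite divnA // mulKn.
Qed.

Theorem theorem1 (aT bT : finGroupType)
    (hA : (1 < #|aT|)%N) (hB : (1 < #|bT|)%N) :
  avg_order (wreath aT bT) =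
  \sum_(m <- divisors #|aT|) \sum_(n <- divisors #|bT|)
     (m%:R / n%:R) * ((s_count aT m)%:R / #|aT|%:R) ^+ n
       * (d_count bT (#|bT| %/ n))%:R * tau (#|aT| %/ m).
Proof.
have N0 := card_pos aT; have B0 := card_pos bT.
rewrite /avg_order.
have cardW : #|{: wreath aT bT}| = (#|aT| ^ #|bT| * #|bT|)%N.
  by rewrite card_prod card_ffun.
have sumW : (\sum_(g : wreath aT bT) #[g]%g)%N =
    (\sum_(x : bT) \sum_(al : {ffun bT -> aT}) #[((al, x) : wreath aT bT)]%g)%N.
  rewrite exchange_big pair_big /=.
  transitivity (\sum_(p : {ffun bT -> aT} * bT) #[(p : wreath aT bT)]%g)%N; first by [].
  by apply: eq_bigr => -[a b] _.
rewrite sumW cardW natr_sum mulr_suml.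
pose H (n : nat) := \sum_(m <- divisors #|aT|)
   (m%:R / n%:R * ((s_count aT m)%:R / #|aT|%:R) ^+ n * tau (#|aT| %/ m)) : rat.
transitivity (\sum_(x : bT) H (#|bT| %/ #[x]%g)%N); last first.
  symmetry; rewrite exchange_big /=.
  transitivity (\sum_(n <- divisors #|bT|) (d_count bT (#|bT| %/ n))%:R * H n).
    apply: eq_bigr => n _; rewrite /H big_distrr; apply: eq_bigr => m _.
    by rewrite mulrAC mulrC.
  transitivity (\sum_(n <- divisors #|bT|) \sum_(x : bT)
                 ((if #[x]%g == (#|bT| %/ n)%N then 1 else 0) * H n)).
    apply: eq_bigr => n _; rewrite -big_distrl /=; congr (_ * _).
    rewrite /d_count -sum1_card natr_sum big_mkcond /=.
    by apply: eq_bigr => x _; rewrite inE; case: ifP.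
  rewrite exchange_big /=; apply: eq_bigr => x _.
  have oB : (#[x]%g %| #|bT|)%N by rewrite -cardsT order_dvdG ?inE.
  rewrite (bigD1_seq (#|bT| %/ #[x]%g)%N) /=; last exact: divisors_uniq.
    rewrite divn_div // eqxx mul1r big1_seq ?addr0 // => n /andP [nne].
    rewrite -dvdn_divisors // => nB; case: eqP; rewrite ?mul0r // => E.
    by move: nne; rewrite E divn_div // eqxx.
  by rewrite -dvdn_divisors // dvdn_div.
apply: eq_bigr => x _; rewrite sum_x.
have Tk : #|Tx x| = (#|bT| %/ #[x]%g)%N by rewrite -(Tx_card x) mulnK // order_gt0.
rewrite -Tk /H big_distrr mulr_suml; apply: eq_bigr => m _.
set k := #|Tx x|; set o := #[x]%g.
have kB : (k <= #|bT|)%N by rewrite -(Tx_card x) leq_pmulr // order_gt0.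
have k0 : (0 < k)%N by move: B0; rewrite -(Tx_card x) muln_gt0 => /andP [].
have eB : (#|aT| ^ #|bT| * #|bT| = #|aT| ^ (#|bT| - k) * #|aT| ^ k * (k * o))%N.
  by rewrite -expnD subnK // Tx_card.
rewrite eB !natrM !natrX expr_div_n.
have nN : (#|aT|%:R : rat) != 0 by rewrite pnatr_eq0 -lt0n.
have nk : (k%:R : rat) != 0 by rewrite pnatr_eq0 -lt0n.
have no : (o%:R : rat) != 0 by rewrite pnatr_eq0 -lt0n order_gt0.
have nP : (#|aT|%:R ^+ (#|bT| - k) : rat) != 0 by rewrite expf_neq0.
have nQ : (#|aT|%:R ^+ k : rat) != 0 by rewrite expf_neq0.
have alg : forall (o1 k1 P Q S m1 t : rat), o1 != 0 -> k1 != 0 -> P != 0 -> Q != 0 ->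
  (o1 * (m1 * t * (S * P))) / (P * Q * (k1 * o1)) = m1 / k1 * (S / Q) * t.
  by move=> o1 k1 P Q S m1 t h1 h2 h3 h4; field; rewrite ?h1 ?h2 ?h3 ?h4.
exact: (alg _ _ _ _ _ _ _ no nk nP nQ).

Qed.
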